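(* Let $(\gamma_n)$ be a sequence of positive reals satisfying conditions (C1)–(C7) below, let $\omega>0$ be fixed, and let $a_n$ be defined as below. Then $\arg a_n\to 0$ as $n\to\infty$, and $\arg a_n>0$ for all sufficiently large $n$.
   Context: Let $\Delta_n=\gamma_{n+1}-\gamma_n$, $\Delta^2_n=\Delta_{n+1}-\Delta_n$. Conditions: (C1) $\gamma_n\to\infty$; (C2) $\Delta_n\to0$; (C3) there exist $n_0,m_0$ with $\gamma_{n+m}>\gamma_n$ for all $n\ge n_0$, $m\ge m_0$; (C4) $\sum 1/\gamma_j=\infty$; (C5) some $\kappa>1$ has $\sum\gamma_j^{-\kappa}<\infty$; (C6) $\sum|\Delta_n|/\gamma_n^2<\infty$; (C7) $\sum|\Delta^2_n|/\gamma_n<\infty$. For $n\ge1$, $a_n=-\frac{\omega^2}{2\gamma_{2n-1}\gamma_{2n}}+\frac{\gamma_{2n-1}}{2\gamma_{2n}}+\frac{\gamma_{2n-2}}{2\gamma_{2n-1}}+i\left(\frac{\omega}{2\gamma_{2n-1}}+\frac{\omega\gamma_{2n-2}}{2\gamma_{2n-1}\gamma_{2n}}\right)$, and $\arg$ denotes the principal argument. *)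

(* Defs.v *)
From Stdlib Require Import Reals Lra ClassicalEpsilon.
From Coquelicot Require Import Coquelicot.
Open Scope R_scope.

(* Principal argument of the complex number x + i y: the unique
   t in (-PI, PI] with x = |z| cos t and y = |z| sin t
   (for z = 0 every such t works; a_n is never 0 here). *)
Definition Arg (z : C) : R :=
  epsilon (inhabits 0%R)
    (fun t => -PI < t <= PI /\
              fst z = sqrt (fst z ^ 2 + snd z ^ 2) * cos t /\
              snd z = sqrt (fst z ^ 2 + snd z ^ 2) * sin t).

Definition gDelta (g : nat -> R) (n : nat) : R := g (S n) - g n.
Definition gDelta2 (g : nat -> R) (n : nat) : R := gDelta g (S n) - gDelta g n.

(* a_n for n >= 1 (for n = 0 the formula is meaningless and irrelevant). *)
Definition a_seq (g : nat -> R) (w : R) (n : nat) : C :=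
  (- w ^ 2 / (2 * g (2 * n - 1)%nat * g (2 * n)%nat)
   + g (2 * n - 1)%nat / (2 * g (2 * n)%nat)
   + g (2 * n - 2)%nat / (2 * g (2 * n - 1)%nat),
   w / (2 * g (2 * n - 1)%nat)
   + w * g (2 * n - 2)%nat / (2 * g (2 * n - 1)%nat * g (2 * n)%nat)).

(* Main.v *)
Require Import Defs.
From Stdlib Require Import Reals Lra Lia Field ClassicalEpsilon. From Coquelicot Require Import Coquelicot.
Open Scope R_scope.
Lemma Arg_pos x y : 0<x -> 0<y -> Arg (x,y) = atan (y/x).
Proof.
 intros Hx Hy. unfold Arg; cbn [fst snd].
 assert (Hr: 0 < sqrt (x^2+y^2)) by (apply sqrt_lt_R0; nra).
 match goal with |- epsilon ?i ?P = _ => assert (H: exists t, P t) end.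
 { exists (atan (y/x)). split. pose proof (atan_bound (y/x)); pose PI_RGT_0; lra.
   rewrite cos_atan, sin_atan.
   assert (E: sqrt(1+(y/x)²) = sqrt (x^2+y^2)/x).
   { rewrite <- (sqrt_Rsqr (sqrt (x^2+y^2)/x)) by (apply Rlt_le, Rdiv_lt_0_compat; lra).
     f_equal; unfold Rsqr.
     replace (sqrt (x^2+y^2)/x*(sqrt (x^2+y^2)/x)) with (sqrt (x^2+y^2)*sqrt (x^2+y^2)/(x*x)) by (field; lra).
     rewrite sqrt_sqrt by nra. field; lra. }
   rewrite E. split; field; lra. }
 pose proof (epsilon_spec (inhabits 0) _ H) as HP. revert HP.
 generalize (epsilon (inhabits 0) (fun t : R =>
      - PI < t <= PI /\
      x = sqrt (x ^ 2 + y ^ 2) * cos t /\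
      y = sqrt (x ^ 2 + y ^ 2) * sin t)).
 intros t [[Ht1 Ht2] [Hc Hs]].
 set (r := sqrt (x ^ 2 + y ^ 2)) in *.
 assert (Hct : 0 < cos t) by nra.
 assert (Hst : 0 < sin t) by nra.
 assert (Ht0 : 0 < t).
 { destruct (Rtotal_order t 0) as [h|[h|h]]; auto.
   - pose proof (sin_lt_0_var t Ht1 h); lra.
   - subst t; rewrite sin_0 in Hst; lra. }
 assert (Ht3 : t < PI/2).
 { destruct (Rlt_or_le t (PI/2)); auto. pose proof PI_RGT_0.
   pose proof (cos_le_0 t ltac:(lra) ltac:(lra)); lra. }
 rewrite <- (atan_tan t) by lra. f_equal. unfold tan. rewrite Hc, Hs. field. lra.
Qed.

Lemma lim_inv_inf (u : nat -> R) : is_lim_seq u p_infty -> is_lim_seq (fun n => / u n) 0.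
Proof. intro H. apply (is_lim_seq_inv u p_infty) in H; [exact H | discriminate]. Qed.

Lemma sub_lim (u : nat -> R) (l : Rbar) (k : nat) : is_lim_seq u l -> is_lim_seq (fun m => u (2*m+k)%nat) l.
Proof.
  intro H. apply (is_lim_seq_subseq u l (fun m => (2*m+k)%nat)); auto.
  apply eventually_subseq. intro n; lia.
Qed.

Lemma Ashift g w m : a_seq g w (S m) =
  (- w ^ 2 / (2 * g (2*m+1)%nat * g (2*m+2)%nat) + g (2*m+1)%nat / (2 * g (2*m+2)%nat)
     + g (2*m)%nat / (2 * g (2*m+1)%nat),
   w / (2 * g (2*m+1)%nat) + w * g (2*m)%nat / (2 * g (2*m+1)%nat * g (2*m+2)%nat)).
Proof.
  unfold a_seq.
  replace (2 * S m - 1)%nat with (2*m+1)%nat by lia.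
  replace (2 * S m - 2)%nat with (2*m)%nat by lia.
  replace (2 * S m)%nat with (2*m+2)%nat by lia. reflexivity.
Qed.

Theorem corollary7 (g : nat -> R) (w : R)
  (Hpos : forall n, 0 < g n)
  (C1 : is_lim_seq g p_infty)
  (C2 : is_lim_seq (gDelta g) 0)
  (C3 : exists n0 m0 : nat, forall n m : nat,
          (n0 <= n)%nat -> (m0 <= m)%nat -> g n < g (n + m)%nat)
  (C4 : is_lim_seq (sum_n (fun j => / g j)) p_infty)
  (C5 : exists kappa : R, 1 < kappa /\
          ex_series (fun j => Rpower (g j) (- kappa)))
  (C6 : ex_series (fun n => Rabs (gDelta g n) / g n ^ 2))
  (C7 : ex_series (fun n => Rabs (gDelta2 g n) / g n))
  (Hw : 0 < w) :
  is_lim_seq (fun n => Arg (a_seq g w n)) 0 /\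
  exists N : nat, forall n : nat, (N <= n)%nat -> 0 < Arg (a_seq g w n).
Proof.
  set (G0 := fun m => g (2*m)%nat). set (G1 := fun m => g (2*m+1)%nat).
  set (G2 := fun m => g (2*m+2)%nat).
  set (X := fun m => - w ^ 2 / (2 * G1 m * G2 m) + G1 m / (2 * G2 m) + G0 m / (2 * G1 m)).
  set (Y := fun m => w / (2 * G1 m) + w * G0 m / (2 * G1 m * G2 m)).
  assert (HA : forall m, a_seq g w (S m) = (X m, Y m)) by (intro m; apply Ashift).
  assert (P0 : forall m, 0 < G0 m) by (intro; apply Hpos).
  assert (P1 : forall m, 0 < G1 m) by (intro; apply Hpos).
  assert (P2 : forall m, 0 < G2 m) by (intro; apply Hpos).
  assert (L1 : is_lim_seq (fun m => / G1 m) 0) by (apply lim_inv_inf, sub_lim, C1).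
  assert (L2 : is_lim_seq (fun m => / G2 m) 0) by (apply lim_inv_inf, sub_lim, C1).
  assert (D0 : is_lim_seq (fun m => gDelta g (2*m+0)%nat) 0) by (apply sub_lim, C2).
  assert (D1 : is_lim_seq (fun m => gDelta g (2*m+1)%nat) 0) by (apply sub_lim, C2).
  assert (R0 : is_lim_seq (fun m => G0 m / G1 m) (1 - 0 * 0)).
  { eapply is_lim_seq_ext; [|apply is_lim_seq_minus'; [apply is_lim_seq_const|apply is_lim_seq_mult'; [exact D0|exact L1]]].
    intro m; cbv beta. unfold gDelta, G0, G1.
    replace (S (2*m+0)) with (2*m+1)%nat by lia. replace (2*m+0)%nat with (2*m)%nat by lia.
    field. specialize (P1 m); unfold G1 in P1; lra. }
  assert (R1 : is_lim_seq (fun m => G1 m / G2 m) (1 - 0 * 0)).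
  { eapply is_lim_seq_ext; [|apply is_lim_seq_minus'; [apply is_lim_seq_const|apply is_lim_seq_mult'; [exact D1|exact L2]]].
    intro m; cbv beta. unfold gDelta, G1, G2.
    replace (S (2*m+1)) with (2*m+2)%nat by lia.
    field. specialize (P2 m); unfold G2 in P2; lra. }
  assert (LX : is_lim_seq X ((-w^2/2) * (0*0) + /2 * (1-0*0) + /2 * (1-0*0))).
  { pose proof (is_lim_seq_mult' _ _ _ _ (is_lim_seq_const (-w^2/2)) (is_lim_seq_mult' _ _ _ _ L1 L2)) as T1.
    pose proof (is_lim_seq_mult' _ _ _ _ (is_lim_seq_const (/2)) R1) as T2.
    pose proof (is_lim_seq_mult' _ _ _ _ (is_lim_seq_const (/2)) R0) as T3.
    eapply is_lim_seq_ext; [|exact (is_lim_seq_plus' _ _ _ _ (is_lim_seq_plus' _ _ _ _ T1 T2) T3)].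
    intro m; unfold X. specialize (P1 m); specialize (P2 m). field; lra. }
  assert (LY : is_lim_seq Y ((w/2) * 0 + (w/2) * ((1-0*0) * 0))).
  { pose proof (is_lim_seq_mult' _ _ _ _ (is_lim_seq_const (w/2)) L1) as T1.
    pose proof (is_lim_seq_mult' _ _ _ _ (is_lim_seq_const (w/2)) (is_lim_seq_mult' _ _ _ _ R0 L2)) as T2.
    eapply is_lim_seq_ext; [|exact (is_lim_seq_plus' _ _ _ _ T1 T2)].
    intro m; unfold Y. specialize (P1 m); specialize (P2 m). field; lra. }
  replace ((-w^2/2) * (0*0) + /2 * (1-0*0) + /2 * (1-0*0)) with 1 in LX by field.
  replace ((w/2) * 0 + (w/2) * ((1-0*0) * 0)) with 0 in LY by ring.
  assert (EX : exists N, forall m, (N <= m)%nat -> 0 < X m).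
  { apply is_lim_seq_spec in LX. destruct (LX (mkposreal 1 Rlt_0_1)) as [N HN].
    exists N. intros m Hm. specialize (HN m Hm). simpl in HN.
    apply Rabs_def2 in HN. lra. }
  assert (PY : forall m, 0 < Y m).
  { intro m; unfold Y. specialize (P0 m); specialize (P1 m); specialize (P2 m).
    apply Rplus_lt_0_compat; apply Rdiv_lt_0_compat; try nra. }
  destruct EX as [N HN]. split.
  - apply is_lim_seq_incr_1.
    apply is_lim_seq_ext_loc with (u := fun m => atan (Y m / X m)).
    { exists N. intros m Hm. rewrite HA, Arg_pos; auto. }
    replace (Finite 0) with (Finite (atan (0 / 1))) by (f_equal; unfold Rdiv; rewrite Rmult_0_l; apply atan_0).
    apply (is_lim_seq_continuous atan (fun m => Y m / X m) (0/1)).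
    + apply continuity_pt_filterlim, continuous_atan.
    + apply is_lim_seq_div'; [exact LY|exact LX|apply R1_neq_R0].
  - exists (S N). intros n Hn. destruct n as [|m]; [lia|].
    rewrite HA, Arg_pos; auto; [|apply HN; lia].
    rewrite <- atan_0. apply atan_increasing. apply Rdiv_lt_0_compat; auto. apply HN; lia.
Qed.
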